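(* Consider the multi-hop multi-channel network and Algorithm 1 described in the context, with parameter $\Delta_{est} \ge \Delta$, and assume $\delta \le \frac{1}{7}$. Let $v$ and $u$ be neighbors, let $f$ be a frame of $v$ and $g$ a frame of $u$ such that the pair $(f,g)$ is aligned. Then the probability that $(f,g)$ covers the link $v \to u$ is at least $\frac{\rho}{8\max(2S,\,3\Delta_{est})}$.
   Context: Network: a finite set of $N$ nodes; each node $u$ has a nonempty available channel set $A_u$; $S=\max_u |A_u|$. Neighborhood on a channel is a symmetric relation; all channels have identical propagation characteristics, so nodes $u,v$ are neighbors on a channel $c$ iff they are neighbors on some channel and $c\in A_u\cap A_v$. For $c\in A_u$, $\deg(u,c)$ is the number of neighbors of $u$ on $c$, and $\Delta=\max_u\max_{c\in A_u}\deg(u,c)$. For neighbors $v,u$ the link $v\to u$ has span $\mathrm{span}(v\to u)=A_u\cap A_v$ and span-ratio $|\mathrm{span}(v\to u)|/|A_u|$; $\rho$ is the minimum span-ratio over all links. A node operates on one channel at a time and cannot transmit and receive simultaneously; a node $u$ listening on channel $c$ throughout a real-time interval $I$ receives a message transmitted on $c$ during $I$ by a neighbor $v$ provided no other neighbor of $u$ on $c$ transmits on $c$ at any time during $I$; there is no collision detection. Clocks: each node $u$ has a clock $C_u$ with $(1-\delta)\Delta t \le C_u(t+\Delta t)-C_u(t)\le(1+\delta)\Delta t$ for all real $t$ and $\Delta t\ge 0$, arbitrary offsets. Algorithm 1 (input: a positive integer $\Delta_{est}$, an upper bound on $\Delta$ known to all nodes): each node starts at an arbitrary real time and partitions its local time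 into consecutive frames of local length $L$, each divided into three consecutive slots of local length $L/3$. At the start of each frame, node $u$ selects a channel $c$ uniformly at random from $A_u$, and with probability $p_u=\min\!\left(\frac12,\frac{|A_u|}{3\Delta_{est}}\right)$ is in transmit mode for that frame, otherwise in receive mode. In transmit mode it transmits on $c$, during each of the three slots of the frame, a message containing its identity and $A_u$; in receive mode it listens on $c$ during the whole frame, and for each message received from a node $v$ containing set $A$ it records $v$ as a neighbor with common channels $A\cap A_u$. All random choices are independent across frames and nodes. Definitions: a pair of frames $(f,g)$ (with $f$ a frame of $v$, $g$ a frame of $u$) is aligned if at least one slot of $f$ lies completely (in real time) within $g$. For a frame $g$ and node $w$, $\mathrm{overlap}(g,w)$ is the set of frames of $w$ overlapping $g$ in real time. The pair $(f,g)$ covers link $v\to u$ on channel $c$ if (i) $v$ transmits on $c$ during $f$, (ii) $u$ listens on $c$ during $g$, and (iii) no neighbor $w\neq v$ of $u$ on $c$ transmits on $c$ during any frame in $\mathrm{overlap}(g,w)$. The pair covers $v\to u$ if it covers it on some channel $c\in\mathrm{span}(v\to u)$. *)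

(* Defs.v *)
From HB Require Import structures.
From mathcomp Require Import all_boot all_order all_algebra.
From mathcomp Require Import boolp reals.
Set Implicit Arguments.
Unset Strict Implicit.
Unset Printing Implicit Defensive.
Import Order.TTheory GRing.Theory Num.Theory.
Local Open Scope ring_scope.

Section Network.
Variables (R : realType) (V C : finType).
Variable A : V -> {set C}.
(* "neighbors on some channel"; neighbors on channel c := nbr x y && c \in A x :&: A y *)
Variable nbr : rel V.

(* deg(x,c): number of neighbors of x on channel c (meaningful for c \in A x) *)
Definition deg (x : V) (c : C) : nat := #|[set w | nbr x w & c \in A w]|.
Definition maxdeg : nat := (\max_(x : V) \max_(c in A x) deg x c)%N.
Definition maxchan : nat := (\max_(x : V) #|A x|)%N.
Definition span_ratio (y x : V) : R := #|A x :&: A y|%:R / #|A x|%:R.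
(* rho = minimum span-ratio over all links y -> x (all ratios are <= 1,
   so the neutral element 1 does not affect the minimum when a link exists) *)
Definition rho : R :=
  \big[Num.min/1]_(x : V) \big[Num.min/1]_(y : V | nbr y x) span_ratio y x.

Definition clock_drift (delta : R) (Cl : R -> R) : Prop :=
  forall t dt, 0 <= dt ->
    (1 - delta) * dt <= Cl (t + dt) - Cl t /\ Cl (t + dt) - Cl t <= (1 + delta) * dt.

Variables (Cl : V -> R -> R) (s : V -> R) (L : R).
(* node x starts at real time s x; frame k of x (k = 0,1,...) is the set of
   real times whose local time lies in [C_x(s_x) + kL, C_x(s_x) + (k+1)L] *)
Definition in_frame (x : V) (k : nat) (t : R) : Prop :=
  s x <= t /\ k%:R * L <= Cl x t - Cl x (s x) /\ Cl x t - Cl x (s x) <= k.+1%:R * L.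
Definition in_slot (x : V) (k : nat) (j : 'I_3) (t : R) : Prop :=
  s x <= t /\ k%:R * L + j%:R * L / 3 <= Cl x t - Cl x (s x) /\
  Cl x t - Cl x (s x) <= k%:R * L + j.+1%:R * L / 3.
Definition aligned (v : V) (f : nat) (u : V) (g : nat) : Prop :=
  exists j : 'I_3, forall t, in_slot v f j t -> in_frame u g t.
Definition overlap (u : V) (g : nat) (w : V) (h : nat) : Prop :=
  exists t, in_frame u g t /\ in_frame w h t.

Definition p_tx (Dest : nat) (x : V) : R :=
  Num.min (1 / 2) (#|A x|%:R / (3 * Dest%:R)).
(* probability that node x, in a given frame, picks channel cb.1 and mode cb.2
   (true = transmit, false = receive); channel uniform on A x, independent of mode *)
Definition choice_weight (Dest : nat) (x : V) (cb : C * bool) : R :=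
  (cb.1 \in A x)%:R / #|A x|%:R * (if cb.2 then p_tx Dest x else 1 - p_tx Dest x).
Definition config (K : nat) := {ffun V * 'I_K -> C * bool}.
(* independent choices: product distribution *)
Definition config_weight (Dest K : nat) (cfg : config K) : R :=
  \prod_(i : V * 'I_K) choice_weight Dest i.1 (cfg i).
Definition sel (K : nat) (cfg : config K) (x : V) (k : nat) : option (C * bool) :=
  omap (fun i : 'I_K => cfg (x, i)) (insub k).

Definition covers_on (K : nat) (cfg : config K) (v : V) (f : nat) (u : V) (g : nat)
  (c : C) : Prop :=
  [/\ sel cfg v f = Some (c, true),
      sel cfg u g = Some (c, false) &
      forall w : V, w != v -> nbr u w -> c \in A u -> c \in A w ->
        forall h : nat, overlap u g w h -> sel cfg w h <> Some (c, true)].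
Definition covers (K : nat) (cfg : config K) (v : V) (f : nat) (u : V) (g : nat) : Prop :=
  exists c, c \in A u :&: A v /\ covers_on cfg v f u g c.
Definition prob_covers (Dest K : nat) (v : V) (f : nat) (u : V) (g : nat) : R :=
  \sum_(cfg : config K | `[< covers cfg v f u g >]) config_weight Dest cfg.
End Network.

(* Main.v *)
Require Import Defs.
From HB Require Import structures.
From mathcomp Require Import all_boot all_order all_algebra.
From mathcomp Require Import boolp reals.
From mathcomp Require Import lra.
Import Order.TTheory GRing.Theory Num.Theory.
Local Open Scope ring_scope.
Lemma overlap_close (R : realType) (V : finType) (Cl : V -> R -> R) (s : V -> R)
  (L delta : R) u g w h1 h2 :
 (forall x, clock_drift delta (Cl x)) -> delta <= 1/7 -> 0 < L ->
 overlap Cl s L u g w h1 -> overlap Cl s L u g w h2 -> (h2 <= h1 + 2)%N.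
Proof.
move=> Hd Hdel HL [t1 [[_ [Hu1 Hu1']] [_ [Hw1 Hw1']]]] [t2 [[_ [Hu2 Hu2']] [_ [Hw2 Hw2']]]].
rewrite leqNgt; apply/negP => Hh.
have Hh' : h1%:R + 3 <= h2%:R :> R.
  by rewrite -(natrD R h1 3) ler_nat addnS.
rewrite -natr1 in Hw1'. rewrite -natr1 in Hu1'.
have Hdiff : Cl w t1 + 2 * L <= Cl w t2 by nra.
case: (lerP t2 t1) => Ht.
  have h0 : 0 <= t1 - t2 by rewrite subr_ge0.
  have [H1 _] := Hd w t2 (t1 - t2) h0.
  have e : t2 + (t1 - t2) = t1 by rewrite addrC subrK.
  rewrite e in H1.
  have : 0 <= (1 - delta) * (t1 - t2) by apply: mulr_ge0; lra.
  lra.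
have h0 : 0 <= t2 - t1 by rewrite subr_ge0 ltW.
have [H1 H2] := Hd w t1 (t2 - t1) h0.
have [H3 H4] := Hd u t1 (t2 - t1) h0.
have e : t1 + (t2 - t1) = t2 by rewrite addrC subrK.
rewrite e in H1 H2 H3 H4.
nra.
Qed.
From mathcomp Require Import zify.
Lemma card_le3 (K : nat) (P : pred 'I_K) :
  (forall k1 k2, P k1 -> P k2 -> (val k2 <= val k1 + 2)%N) -> (#|P| <= 3)%N.
Proof.
move=> HP.
case: (pickP P) => [k0 Pk0|none]; last by rewrite (eq_card0 none).
case: (arg_minnP (fun k : 'I_K => val k) Pk0) => m Pm minm.
rewrite -[3%N](card_ord 3).
apply: (@leq_card_in _ _ (fun k : 'I_K => (inord (val k - val m) : 'I_3))).
move=> k1 k2 P1 P2 /= E.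
have a1 := minm _ P1; have a2 := minm _ P2.
have b1 := HP _ _ Pm P1; have b2 := HP _ _ Pm P2.
move: a1 a2 b1 b2 => /= a1 a2 b1 b2.
have := congr1 (@nat_of_ord 3) E; rewrite !inordK; try lia.
move=> E'; apply: ord_inj; lia.
Qed.

Lemma bigmin_le_seq (R : realType) (I : eqType) (r : seq I) (P : pred I) (F : I -> R) j :
  j \in r -> P j -> \big[Num.min/1]_(i <- r | P i) F i <= F j.
Proof.
elim: r => [//|x r IH]; rewrite inE big_cons => /orP [/eqP -> Pj|jr Pj].
  by rewrite Pj ge_min lexx.
case: (P x); last exact: IH.
by rewrite ge_min IH ?orbT.
Qed.

Lemma bigmin_le (R : realType) (I : finType) (P : pred I) (F : I -> R) j :
  P j -> \big[Num.min/1]_(i | P i) F i <= F j.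
Proof. by move=> Pj; apply: bigmin_le_seq => //; rewrite mem_index_enum. Qed.

Lemma prod_1m (R : realType) (I : finType) (P : pred I) (a : I -> R) :
  (forall i, P i -> 0 <= a i <= 1) ->
  1 - \sum_(i | P i) a i <= \prod_(i | P i) (1 - a i).
Proof.
move=> Ha.
have : (1 - \sum_(i | P i) a i <= \prod_(i | P i) (1 - a i)) /\
       (0 <= \prod_(i | P i) (1 - a i) <= 1) /\ 0 <= \sum_(i | P i) a i.
  apply: (big_rec2 (fun x y => (1 - y <= x) /\ (0 <= x <= 1) /\ 0 <= y)).
    by rewrite subr0 lexx ler01.
  move=> i x y Pi [h1 [/andP [h2 h3] h4]].
  have /andP [a0 a1] := Ha i Pi.
  split; first nra.
  split; last lra.
  apply/andP; split; nra.
by case.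
Qed.

Lemma ptx_bounds (R : realType) (V C : finType) (A : V -> {set C}) (D : nat) x :
  0 <= p_tx R A D x /\ p_tx R A D x <= 1/2 /\ p_tx R A D x <= #|A x|%:R / (3 * D%:R).
Proof.
rewrite /p_tx; split; last first.
  split; rewrite ge_min lexx ?orbT //.

rewrite le_min; apply/andP; split; first lra.
by apply: divr_ge0; rewrite ?mulr_ge0 ?ler0n.
Qed.

Lemma cw_ge0 (R : realType) (V C : finType) (A : V -> {set C}) (D : nat) x cb :
  0 <= choice_weight R A D x cb.
Proof.
have [h1 [h2 _]] := @ptx_bounds R _ _ A D x.
rewrite /choice_weight; apply: mulr_ge0; first by apply: divr_ge0; rewrite ler0n.
case: cb.2; lra.
Qed.

Lemma cw_sum1 (R : realType) (V C : finType) (A : V -> {set C}) (D : nat) x :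
  A x != set0 -> \sum_(cb : C * bool) choice_weight R A D x cb = 1.
Proof.
move=> Ane.
have cA : (0 < #|A x|)%N by rewrite card_gt0.
rewrite -(pair_bigA _ (fun c b => choice_weight R A D x (c, b))) /=.
under eq_bigr do rewrite big_bool /choice_weight /= -mulrDr addrC subrK mulr1.
rewrite -mulr_suml.
rewrite (eq_bigr (fun c => if c \in A x then 1 else 0)); last by move=> c _; case: (c \in A x).
rewrite -big_mkcond sumr_const.
by rewrite mulfV // pnatr_eq0 -lt0n.
Qed.

Lemma sum_eq1 (R : realType) (J : finType) (F : J -> R) y :
  \sum_x F x * (x == y)%:R = F y.
Proof.
rewrite (bigD1 y) //= eqxx mulr1 big1 ?addr0 // => x /negbTE ->; by rewrite mulr0.
Qed.

Lemma sum_neq1 (R : realType) (J : finType) (F : J -> R) y :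
  \sum_x F x * (x != y)%:R = \sum_x F x - F y.
Proof.
rewrite (bigD1 y) //= [in RHS](bigD1 y) //= eqxx /= mulr0 add0r addrAC subrr add0r.
by apply: eq_bigr => x ->; rewrite mulr1.
Qed.

Lemma sel_lt (V C : finType) (K : nat) (cfg : config V C K) x k (Hk : (k < K)%N) :
  sel cfg x k = Some (cfg (x, Ordinal Hk)).
Proof. by rewrite /sel insubT. Qed.

Lemma prod_indep (R : realType) (I J : finType) (w : I -> J -> R) (P : I -> pred J) :
  \sum_(cfg : {ffun I -> J}) (\prod_i w i (cfg i)) * ([forall i, P i (cfg i)])%:R
  = \prod_i \sum_j w i j * (P i j)%:R.
Proof.
rewrite bigA_distr_bigA /=; apply: eq_bigr => cfg _.
rewrite big_split /=; congr (_ * _).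
case: (boolP [forall i, P i (cfg i)]) => [/forallP H|/forallPn [i Hi]].
  by rewrite big1 // => i _; rewrite H.
by rewrite (bigD1 i) //= (negbTE Hi) mul0r.
Qed.

Theorem mainTheorem2 (R : realType) (V C : finType) (A : V -> {set C}) (nbr : rel V)
    (Cl : V -> R -> R) (s : V -> R) (L delta : R) (Dest K : nat)
    (v u : V) (f g : nat) :
  (forall x, A x != set0) ->
  (forall x y, nbr x y = nbr y x) ->
  (forall x, ~~ nbr x x) ->
  (forall x y, nbr x y -> A x :&: A y != set0) ->
  (forall x, clock_drift delta (Cl x)) ->
  delta <= 1 / 7 ->
  0 < L ->
  (0 < Dest)%N ->
  (maxdeg A nbr <= Dest)%N ->
  nbr v u ->
  aligned Cl s L v f u g ->
  (f < K)%N -> (g < K)%N ->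
  (forall w h, overlap Cl s L u g w h -> (h < K)%N) ->
  rho R A nbr / (8 * Num.max (2 * (maxchan A)%:R) (3 * Dest%:R))
    <= prob_covers A nbr Cl s L Dest K v f u g.
Proof.
move=> HA Hsym Hirr _ Hclk Hdel HL HD Hmax Hvu _ Hf Hg Hov.
pose vf : V * 'I_K := (v, Ordinal Hf).
pose ug : V * 'I_K := (u, Ordinal Hg).
pose intf c w := (w != v) && nbr u w && (c \in A w).
pose ov (i : V * 'I_K) := `[< overlap Cl s L u g i.1 (val i.2) >].
pose Pc c (i : V * 'I_K) (x : C * bool) : bool :=
  if i == vf then x == (c, true) else if i == ug then x == (c, false)
  else if intf c i.1 && ov i then x != (c, true) else true.
pose E c (cfg : config V C K) := [forall i, Pc c i (cfg i)].
have neq_vu : v != u by apply/eqP => e; move: Hvu; rewrite e (negbTE (Hirr u)).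
have neq_ugvf : ug != vf by rewrite /ug /vf xpair_eqE eq_sym (negbTE neq_vu).
have coverE : forall c cfg, c \in A u :&: A v -> E c cfg ->
    covers A nbr Cl s L cfg v f u g.
  move=> c cfg Hc /forallP HE; exists c; split => //.
  split.
  - have := HE vf; rewrite /Pc eqxx => /eqP <-.
    by rewrite (@sel_lt _ _ _ cfg v f Hf).
  - have := HE ug; rewrite /Pc (negbTE neq_ugvf) eqxx => /eqP <-.
    by rewrite (@sel_lt _ _ _ cfg u g Hg).
  - move=> w Hwv Huw Hcu Hcw h Hovh.
    have hK := Hov w h Hovh.
    rewrite (@sel_lt _ _ _ cfg w h hK).
    have := HE (w, Ordinal hK); rewrite /Pc.
    have -> : ((w, Ordinal hK) == vf) = false by rewrite xpair_eqE (negbTE Hwv).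
    have -> : ((w, Ordinal hK) == ug) = false.
      rewrite xpair_eqE; case: eqP => //= e; move: Huw; by rewrite e (negbTE (Hirr u)).
    have -> : intf c (w, Ordinal hK).1 && ov (w, Ordinal hK).
      by rewrite /intf /ov /= Hwv Huw Hcw /=; apply/asboolP.
    by move=> /eqP H [] /H.
have stepB : \sum_(c in A u :&: A v) \sum_(cfg : config V C K)
      config_weight R A Dest cfg * (E c cfg)%:R
    <= prob_covers A nbr Cl s L Dest K v f u g.
  rewrite /prob_covers exchange_big /= [X in _ <= X]big_mkcond /=.
  apply: ler_sum => cfg _.
  have W0 : 0 <= config_weight R A Dest cfg.
    by apply: prodr_ge0 => i _; apply: cw_ge0.
  set cs := (cfg vf).1.
  have Ec : forall c, E c cfg -> c = cs.
    by move=> c /forallP /(_ vf); rewrite /Pc eqxx => /eqP e; rewrite /cs e.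
  case: (boolP ((cs \in A u :&: A v) && E cs cfg)) => [/andP [Hcs Ecs]|Hn].
    rewrite (bigD1 cs) //= big1 ?addr0.
      rewrite Ecs mulr1; case: asboolP => // H; exfalso; apply: H; exact: (coverE cs cfg Hcs Ecs).
    move=> c /andP [_ Hc]; case: (boolP (E c cfg)) => [/Ec e|_].
      by rewrite e eqxx in Hc.
    by rewrite mulr0.
  rewrite big1; first by case: asboolP.
  move=> c Hc; case: (boolP (E c cfg)) => [Hec|_]; last by rewrite mulr0.
  by move: Hn; rewrite -(Ec c Hec) Hc Hec.
pose G c (i : V * 'I_K) : R :=
  if intf c i.1 && ov i then 1 - choice_weight R A Dest i.1 (c, true) else 1.
have stepF : forall c, c \in A u -> 8 / 27 <= \prod_i G c i.
  move=> c Hcu.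
  have -> : \prod_i G c i = \prod_w \prod_k G c (w, k).
    by rewrite pair_bigA; apply: eq_bigr => -[].
  pose r w := if intf c w then choice_weight R A Dest w (c, true) else 0.
  have D0 : 0 < Dest%:R :> R by rewrite ltr0n.
  have rB : forall w, 0 <= r w /\ r w <= (intf c w)%:R / (3 * Dest%:R).
    move=> w; rewrite /r; case: (boolP (intf c w)) => Hi; last by rewrite mul0r; lra.
    have /andP [_ Hcw] := Hi.
    have [p0 [p1 p2]] := @ptx_bounds R _ _ A Dest w.
    have aw0 : 0 < #|A w|%:R :> R by rewrite ltr0n card_gt0.
    rewrite /choice_weight /= Hcw mul1r; split.
      by apply: mulr_ge0 => //; rewrite invr_ge0; lra.
    rewrite mulrC ler_pdivrMr // mul1r.
    apply: le_trans p2 _; rewrite ler_pdivrMr; last by lra.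
    rewrite mulrAC mulVf ?mul1r //; lra.
  have rB1 : forall w, 0 <= r w <= 1.
    move=> w; have [h1 h2] := rB w; apply/andP; split => //.
    apply: le_trans h2 _; rewrite ler_pdivrMr; last by lra.
    have : (intf c w)%:R <= 1 :> R by case: (intf c w); rewrite ?ler01 ?lexx.
    have : 1 <= Dest%:R :> R by rewrite ler1n.
    lra.
  have Hw : forall w, (1 - r w) ^+ 3 <= \prod_k G c (w, k).
    move=> w; rewrite /G /=; case: (boolP (intf c w)) => Hi /=.
      have /andP [r0 r1] := rB1 w.
      rewrite /r Hi in r0 r1 *.
      rewrite -big_mkcond prodr_const.
      apply: ler_wiXn2l; [lra|lra|].
      apply: card_le3 => k1 k2; rewrite /ov /= => /asboolP H1 /asboolP H2.
      exact: (@overlap_close R V Cl s L delta u g w _ _ Hclk Hdel HL H1 H2).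
    by rewrite /r (negbTE Hi) subr0 expr1n big1.
  have sumB : \sum_w r w <= 1 / 3.
    apply: le_trans (ler_sum _ (fun w _ => proj2 (rB w))) _.
    rewrite -mulr_suml.
    have -> : \sum_w (intf c w)%:R = #|[pred w | intf c w]|%:R :> R.
      rewrite (eq_bigr (fun w => if intf c w then 1 else 0)); last first.
        by move=> w _; case: (intf c w).
      by rewrite -big_mkcond sumr_const.
    have cardB : (#|[pred w | intf c w]| <= Dest)%N.
      apply: (@leq_trans (deg A nbr u c)).
        rewrite /deg; apply: subset_leq_card; apply/subsetP => w.
        rewrite inE /intf => /andP [/andP [_ h1] h2].
        by rewrite h1 h2.
      apply: leq_trans _ Hmax.
      apply: (@leq_trans (\max_(c0 in A u) deg A nbr u c0)).
        exact: (@leq_bigmax_cond _ (fun c0 => c0 \in A u) (deg A nbr u) c Hcu).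
      exact: (@leq_bigmax_cond _ xpredT (fun x => \max_(c0 in A x) deg A nbr x c0) u isT).
    move: cardB; rewrite -(ler_nat R) => cardB.
    rewrite ler_pdivrMr; last by lra.
    lra.
  have sum0 : 0 <= \sum_w r w by apply: sumr_ge0 => w _; have [] := rB w.
  apply: le_trans (_ : (1 - \sum_w r w) ^+ 3 <= _).
    apply: le_trans (_ : (2 / 3) ^+ 3 <= _).
      by rewrite !exprS expr0 mulr1; lra.
    by apply: lerXn2r; rewrite ?nnegrE; lra.
  apply: le_trans (_ : (\prod_w (1 - r w)) ^+ 3 <= _).
    apply: lerXn2r; rewrite ?nnegrE; first lra.
      by apply: prodr_ge0 => w _; have /andP [_ h] := rB1 w; lra.
    by apply: prod_1m => w _; exact: rB1.
  rewrite -prodrXl; apply: ler_prod => w _; apply/andP; split; last exact: Hw.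
  by apply: exprn_ge0; have /andP [_ h] := rB1 w; lra.
have stepC : forall c, c \in A u :&: A v ->
    p_tx R A Dest v / #|A v|%:R * ((1 - p_tx R A Dest u) / #|A u|%:R) * (8 / 27)
    <= \sum_(cfg : config V C K) config_weight R A Dest cfg * (E c cfg)%:R.
  move=> c Hc; have /setIP [Hcu Hcv] := Hc.
  have -> : \sum_(cfg : config V C K) config_weight R A Dest cfg * (E c cfg)%:R
      = \prod_i \sum_x choice_weight R A Dest i.1 x * (Pc c i x)%:R.
    exact: (@prod_indep R _ _ (fun i x => choice_weight R A Dest i.1 x) (Pc c)).
  rewrite (bigD1 vf) //= (bigD1 ug) //=.
  have -> : \sum_x choice_weight R A Dest v x * (Pc c vf x)%:R
      = p_tx R A Dest v / #|A v|%:R.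
    by rewrite /Pc eqxx sum_eq1 /choice_weight /= Hcv mul1r mulrC.
  have -> : \sum_x choice_weight R A Dest u x * (Pc c ug x)%:R
      = (1 - p_tx R A Dest u) / #|A u|%:R.
    by rewrite /Pc (negbTE neq_ugvf) eqxx sum_eq1 /choice_weight /= Hcu mul1r mulrC.
  have -> : \prod_(i | (i != vf) && (i != ug))
      \sum_x choice_weight R A Dest i.1 x * (Pc c i x)%:R = \prod_i G c i.
    rewrite [RHS](bigD1 vf) //= [in RHS](bigD1 ug) //=.
    have -> : G c vf = 1 by rewrite /G /intf /= eqxx.
    have -> : G c ug = 1 by rewrite /G /intf /= (negbTE (Hirr u)) andbF.
    rewrite !mul1r; apply: eq_bigr => i /andP [Hi1 Hi2].
    rewrite /Pc (negbTE Hi1) (negbTE Hi2) /G.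
    case: ifP => _.
      by rewrite sum_neq1 cw_sum1.
    by rewrite (eq_bigr _ (fun x _ => mulr1 _)) cw_sum1.
  have hv := @ptx_bounds R _ _ A Dest v.
  have hu := @ptx_bounds R _ _ A Dest u.
  have hF := stepF c Hcu.
  rewrite mulrA; apply: ler_wpM2l => //.
  apply: mulr_ge0; apply: divr_ge0; rewrite ?ler0n //; lra.
apply: le_trans stepB.
apply: le_trans (ler_sum _ stepC).
rewrite sumr_const -[_ *+ #|_|]mulr_natr.
set M := Num.max _ _.
set n := #|A u :&: A v|%:R.
have hv := @ptx_bounds R _ _ A Dest v.
have hu := @ptx_bounds R _ _ A Dest u.
have au0 : 0 < #|A u|%:R :> R by rewrite ltr0n card_gt0.
have av0 : 0 < #|A v|%:R :> R by rewrite ltr0n card_gt0.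
have D0 : 0 < Dest%:R :> R by rewrite ltr0n.
have SM : 2 * #|A v|%:R <= M.
  rewrite le_max; apply/orP; left.
  have : (#|A v| <= maxchan A)%N by apply: (@leq_bigmax_cond _ xpredT (fun x => #|A x|)).
  rewrite -(ler_nat R) => h; lra.
have DM : 3 * Dest%:R <= M by rewrite le_max lexx orbT.
have M0 : 0 < M by lra.
have rhoB : rho R A nbr <= n / #|A u|%:R.
  rewrite /rho; apply: le_trans (@bigmin_le R V xpredT _ u isT) _.
  exact: (@bigmin_le R V (fun y => nbr y u) (fun y => span_ratio R A y u) v Hvu).
have pvB : #|A v|%:R / M <= p_tx R A Dest v.
  rewrite /p_tx le_min; apply/andP; split.
    rewrite ler_pdivrMr //; lra.
  rewrite ler_pdivrMr // mulrAC ler_pdivlMr; last by lra.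
  by apply: ler_wpM2l; [lra|].
have pvB' : M^-1 <= p_tx R A Dest v / #|A v|%:R.
  by rewrite ler_pdivlMr // mulrC.
set X := p_tx R A Dest v / #|A v|%:R.
set Y := (1 - p_tx R A Dest u) / #|A u|%:R.
pose ia := (#|A u|%:R)^-1 : R.
pose im := M^-1.
have rhoB' : rho R A nbr <= n * ia by [].
have ia0 : 0 < ia by rewrite invr_gt0.
have im0 : 0 < im by rewrite invr_gt0.
have n0 : 0 <= n by rewrite ler0n.
have hY : ia / 2 <= Y.
  rewrite /Y -/ia mulrC; apply: le_trans (_ : ia * (1/2) <= _).
    lra.
  rewrite [ia * _]mulrC; apply: ler_wpM2r; first lra.
  have [_ [hu2 _]] := hu; lra.
have pvB'' : im <= X by [].
have h1 : im * (ia / 2) <= X * Y by apply: ler_pM => //; lra.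
have h2 : im * (ia / 2) * n <= X * Y * n by apply: ler_wpM2r.
have h3 : im * rho R A nbr <= im * (n * ia).
  by apply: ler_wpM2l => //; apply: ltW.
rewrite invfM.
have h4 : 0 <= im * (ia / 2) * n.
  by apply: mulr_ge0 => //; apply: mulr_ge0; lra.
move: h2 h3 h4; clear; move=> h2 h3 h4.
rewrite -/im.
clearbody X Y ia im.
move: (rho R A nbr) X Y ia im n h2 h3 h4 => r x y a m k h2 h3 h4.
lra.
Qed.
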